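(* Let $(G,w)$ be a weighted trigraph and let $(A,B,C)$ be a cut-partition of $G$. For each $X\in\{A,B\}$, let $G_X$ be a trigraph obtained from $G[X\cup C]$ by turning some (possibly none) of the strongly anti-adjacent pairs of $G[X\cup C]$ into semi-adjacent pairs (so that $w$ restricted to $D(G_X)$ is a weight function for $G_X$). For every $C'\subseteq C$ set $\alpha_{A\cup C'}=\alpha(\mathrm{Red}[G_A,w;A\cup C'])+\mathrm{Ext}[G_A,w;A\cup C']$. Let $k\in\mathbb N$ and let $w_B$ be a weight function for $G_B$ such that: $w_B(u)=w(u)$ for all $u\in B$; $w_B(u,v)=w(u,v)$, $w_B(v,u)=w(v,u)$ and $w_B(uv)=w(uv)$ for all $uv\in\binom{B\cup C}{2}\setminus\binom{C}{2}$; and $\llbracket S_C\rrbracket_{(G_B[C],w_B)}=\alpha_{A\cup S_C}-k$ for every $S_C\subseteq C$ that is a stable set of $G_B$. Then $\alpha(G,w)=k+\alpha(G_B,w_B)$.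
   Context: A trigraph $G$ consists of a finite vertex set $V(G)$ and an adjacency function $\theta_G:\binom{V(G)}{2}\to\{-1,0,1\}$; for distinct $u,v$ write $uv$ for $\{u,v\}$. The pair $uv$ is strongly adjacent if $\theta_G(uv)=1$, semi-adjacent if $\theta_G(uv)=0$, strongly anti-adjacent if $\theta_G(uv)=-1$; $u,v$ are anti-adjacent if $\theta_G(uv)\le 0$. A stable set is a set of pairwise anti-adjacent vertices. For $X\subseteq V(G)$, $G[X]$ is the trigraph on $X$ with the restricted adjacency function. $\mathbb N$ denotes the non-negative integers. For a trigraph $G$ let $D(G)=V(G)\cup\{(u,v):u,v\in V(G),u\neq v\}\cup\binom{V(G)}{2}$. A weight function for $G$ is a map $w:D(G)\to\mathbb N$ such that for all distinct $u,v$: if $uv$ is not semi-adjacent then $w(u,v)=w(v,u)=w(uv)=0$, and $w(u,v)\le w(uv)$. A weighted trigraph is a pair $(G,w)$ with $w$ a weight function for $G$; for $X\subseteq V(G)$, $(G[X],w)$ denotes $(G[X],w|_{D(G[X])})$. The weight of $S\subseteq V(G)$ is $\llbracket S\rrbracket_{(G,w)}=\sum_{u\in S}w(u)+\sum_{u\in S}\sum_{v\in V(G)\setminus S}w(u,v)+\sum_{uv\in\binom{V(G)\setminus S}{2}}w(uv)$, and $\alpha(G,w)=\max\{\llbracket S\rrbracket_{(G,w)}: S \text{ a stable set of } G\}$. For $R\subseteq V(G)$, the reduction $\mathrm{Red}[G,w;R]$ is the weighted trigraph $(G[R],w')$ where $w'(u)=\max\{w(u)-\sum_{v\in V(G)\setminus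 R}(w(uv)-w(u,v)),0\}$ for $u\in R$, and $w'(u,v)=w(u,v)$, $w'(uv)=w(uv)$ for distinct $u,v\in R$. The exterior weight is $\mathrm{Ext}[G,w;R]=\sum_{uv\in\binom{V(G)\setminus R}{2}}w(uv)+\sum_{u\in R}\sum_{v\in V(G)\setminus R}w(uv)$. A cut-partition of $G$ is a partition $(A,B,C)$ of $V(G)$ with $A,B$ non-empty ($C$ possibly empty) such that every vertex of $A$ is strongly anti-adjacent to every vertex of $B$. *)

(* Defs.v *)
From HB Require Import structures.
From mathcomp Require Import all_boot all_order all_algebra.
Set Implicit Arguments. Unset Strict Implicit. Unset Printing Implicit Defensive.
Import GRing.Theory Num.Theory.

(* Vertices live in an ambient finite type T; a trigraph has a finite vertex
   set V(G) : {set T} and an adjacency function on unordered pairs, where an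
   unordered pair {u,v} is the 2-element set [set u; v]. Only the values of
   tadj on 2-subsets of V(G) are meaningful. *)
Record trigraph (T : finType) := Trigraph {
  tverts : {set T};
  tadj : {set T} -> int }.

(* A weight map: values on vertices, on ordered pairs (u,v), and on unordered
   pairs {u,v}.  Only values on D(G) are meaningful. *)
Record weight (T : finType) := Weight {
  wv : T -> nat;
  wo : T -> T -> nat;
  wu : {set T} -> nat }.

Definition pairs2 (T : finType) (X : {set T}) : {set {set T}} :=
  [set e : {set T} | (e \subset X) && (#|e| == 2)].

Definition is_trigraph (T : finType) (G : trigraph T) : Prop :=
  forall e, e \in pairs2 (tverts G) ->
    tadj G e \in [:: (-1)%R; 0%R; 1%R].

Definition is_weight_function (T : finType) (G : trigraph T) (w : weight T) : Prop :=
  forall u v, u \in tverts G -> v \in tverts G -> u != v ->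
    (tadj G [set u; v] != 0%R ->
       [/\ wo w u v = 0, wo w v u = 0 & wu w [set u; v] = 0])
    /\ wo w u v <= wu w [set u; v].

(* G[X] : restriction of the adjacency function is implicit *)
Definition induced (T : finType) (G : trigraph T) (X : {set T}) : trigraph T :=
  Trigraph X (tadj G).

Definition stable (T : finType) (G : trigraph T) (S : {set T}) : bool :=
  (S \subset tverts G) &&
  [forall u in S, forall v in S, (u != v) ==> (tadj G [set u; v] <= 0)%R].

Definition wt (T : finType) (G : trigraph T) (w : weight T) (S : {set T}) : nat :=
  \sum_(u in S) wv w u
  + \sum_(u in S) \sum_(v in tverts G :\: S) wo w u v
  + \sum_(e in pairs2 (tverts G :\: S)) wu w e.

Definition alpha (T : finType) (G : trigraph T) (w : weight T) : nat :=
  \max_(S : {set T} | stable G S) wt G w S.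

(* Red[G,w;R] = (red_graph G R, red_weight G w R).  The outer max(.,0) is
   truncated subtraction on nat; the inner differences w(uv)-w(u,v) are
   non-negative for a weight function. *)
Definition red_graph (T : finType) (G : trigraph T) (R : {set T}) : trigraph T :=
  induced G R.

Definition red_weight (T : finType) (G : trigraph T) (w : weight T) (R : {set T})
  : weight T :=
  Weight (fun u => wv w u - \sum_(v in tverts G :\: R) (wu w [set u; v] - wo w u v))
         (wo w) (wu w).

Definition ext (T : finType) (G : trigraph T) (w : weight T) (R : {set T}) : nat :=
  \sum_(e in pairs2 (tverts G :\: R)) wu w e
  + \sum_(u in R) \sum_(v in tverts G :\: R) wu w [set u; v].

Definition cut_partition (T : finType) (G : trigraph T) (A B C : {set T}) : Prop :=
  [/\ A :|: B :|: C = tverts G,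
      [disjoint A & B], [disjoint A & C] & [disjoint B & C]]
  /\ [/\ A != set0, B != set0 &
      forall a b, a \in A -> b \in B -> tadj G [set a; b] = (-1)%R].

Definition relaxation (T : finType) (G : trigraph T) (X : {set T}) (H : trigraph T)
  : Prop :=
  tverts H = X /\
  forall e, e \in pairs2 X ->
    tadj H e = tadj G e \/ (tadj G e = (-1)%R /\ tadj H e = 0%R).

Definition alphaAC (T : finType) (GA : trigraph T) (w : weight T) (A C' : {set T}) : nat :=
  alpha (red_graph GA (A :|: C')) (red_weight GA w (A :|: C')) + ext GA w (A :|: C').

(* Main.v *)
Require Import Defs.
From mathcomp Require Import all_boot all_order all_algebra.
From mathcomp Require Import zify.
Set Implicit Arguments. Unset Strict Implicit. Unset Printing Implicit Defensive.

Section Gen.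
Variable T : finType.
Implicit Types (X Y Z S : {set T}) (f : {set T} -> nat).

Lemma disjI X Y : (forall x, x \in X -> x \in Y -> False) -> [disjoint X & Y].
Proof.
move=> h; rewrite disjoint_subset; apply/subsetP => x xX; rewrite inE.
by apply/negP => xY; exact: h x xX xY.
Qed.

Lemma disjE X Y x : [disjoint X & Y] -> x \in X -> x \in Y -> False.
Proof. by move=> d xX; rewrite (disjointFr d xX). Qed.
Arguments disjE {X Y x}.

Lemma sumU (F : T -> nat) X Y : [disjoint X & Y] ->
  \sum_(u in X :|: Y) F u = \sum_(u in X) F u + \sum_(u in Y) F u.
Proof. by move=> d; rewrite -bigU //; apply: eq_bigl => x; rewrite !inE. Qed.

Lemma pairs2P X e : e \in pairs2 X ->
  exists u v, [/\ u \in X, v \in X, u != v & e = [set u; v]].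
Proof.
rewrite inE => /andP [sub /cards2P [u [v [uv E]]]].
exists u, v; split => //; apply: (subsetP sub); by rewrite E !inE eqxx ?orbT.
Qed.

Lemma pairs2_in X u v : u \in X -> v \in X -> u != v -> [set u; v] \in pairs2 X.
Proof.
move=> uX vX uv; rewrite inE cards2 uv andbT; apply/subsetP => x.
by rewrite !inE => /orP [] /eqP ->.
Qed.

Lemma pairs2_double f X : 2 * \sum_(e in pairs2 X) f e =
  \sum_(u in X) \sum_(v in X :\ u) f [set u; v].
Proof.
rewrite (pair_big_dep (fun u => u \in X) (fun u v => v \in X :\ u)
   (fun u v => f [set u; v])) /=.
rewrite (partition_big (fun p : T * T => [set p.1; p.2]) (mem (pairs2 X))) /=;
  last first.
  by move=> [u v] /= /andP [uX]; rewrite in_setD1 => /andP [vu vX]; apply: pairs2_in => //; rewrite eq_sym.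
rewrite big_distrr /=; apply: eq_bigr => e eX.
rewrite (eq_bigr (fun _ => f e)); last by move=> p /andP [_ /eqP ->].
rewrite sum_nat_cond_const; congr (_ * _).
have [a [b [aX bX ab E]]] := pairs2P eX.
have nab : (a, b) != (b, a) by apply: contra ab => /eqP [->].
symmetry; transitivity #|[set (a, b); (b, a)]|; last by rewrite cards2 nab.
apply: eq_card; case => x y; rewrite !inE /= E.
apply/idP/idP.
- case/andP => /and3P [xX yx yX] /eqP Exy.
  have : x \in [set a; b] by rewrite -Exy !inE eqxx.
  have : y \in [set a; b] by rewrite -Exy !inE eqxx orbT.
  rewrite !inE !xpair_eqE => /orP [] /eqP ? /orP [] /eqP ?; subst x y;
    rewrite ?eqxx ?orbT //; by rewrite eqxx in yx.
- rewrite !xpair_eqE => /orP [] /andP [/eqP -> /eqP ->];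
    rewrite aX bX ?(eq_sym b a) ab /= ?eqxx //.
  by rewrite [X in X == _]setUC.
Qed.

Lemma pairs2_split f X Y : [disjoint X & Y] ->
  \sum_(e in pairs2 (X :|: Y)) f e = \sum_(e in pairs2 X) f e +
    \sum_(e in pairs2 Y) f e + \sum_(u in X) \sum_(v in Y) f [set u; v].
Proof.
move=> dXY.
have dis u : u \in X -> u \in Y -> False.
  by move=> uX uY; apply: (disjE dXY uX uY).
suff : 2 * \sum_(e in pairs2 (X :|: Y)) f e = 2 * (\sum_(e in pairs2 X) f e +
    \sum_(e in pairs2 Y) f e + \sum_(u in X) \sum_(v in Y) f [set u; v]) by lia.
rewrite pairs2_double sumU //.
rewrite (eq_bigr (fun u => \sum_(v in X :\ u) f [set u; v] + \sum_(v in Y) f [set u; v]));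
  last first.
  move=> u uX; rewrite -sumU; last first.
    apply/disjI => v; rewrite !inE => /andP [_ vX] vY; exact: (dis v).
  apply: eq_bigl => v; rewrite !inE; case: (eqVneq v u) => [->|] //=.
  by symmetry; apply/negbTE/negP => uY; exact: dis u uX uY.
rewrite [\sum_(u in Y) _](eq_bigr (fun u => \sum_(v in X) f [set v; u] + \sum_(v in Y :\ u) f [set u; v]));
  last first.
  move=> u uY.
  rewrite [Z in Z + _](eq_bigr (fun v => f [set u; v])); last by move=> v _; rewrite setUC.
  rewrite -sumU; last first.
    apply/disjI => v; rewrite !inE => vX /andP [_ vY]; exact: (dis v).
  apply: eq_bigl => v; rewrite !inE; case: (eqVneq v u) => [->|] //=.
  by rewrite orbF; symmetry; apply/negbTE/negP => uX; exact: dis u uX uY.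
rewrite !big_split /= !mulnDr (pairs2_double f X) (pairs2_double f Y).
rewrite [\sum_(i in Y) \sum_(v in X) _]exchange_big /=; lia.
Qed.

Lemma pairs2_set1 (u : T) : pairs2 [set u] = set0.
Proof.
apply/setP => e; rewrite inE [RHS]inE; apply/negbTE/negP => /andP [sub /eqP c2].
by have := subset_leq_card sub; rewrite c2 cards1.
Qed.

Lemma pairs2_set0 : pairs2 (set0 : {set T}) = set0.
Proof.
apply/setP => e; rewrite inE [RHS]inE; apply/negbTE/negP => /andP [sub /eqP c2].
by have := subset_leq_card sub; rewrite c2 cards0.
Qed.

End Gen.

Section W.
Variable T : finType.
Implicit Types (X Y Z S : {set T}) (f : {set T} -> nat) (w : weight T).

Definition wtV X w S : nat :=
  \sum_(u in S) wv w u
  + \sum_(u in S) \sum_(v in X :\: S) wo w u v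
  + \sum_(e in pairs2 (X :\: S)) wu w e.

Lemma wtE (G : trigraph T) w S : wt G w S = wtV (tverts G) w S.
Proof. by []. Qed.

Lemma R1 X w S u : u \in S -> u \in X ->
  wtV X w (S :\ u) + wv w u + \sum_(b in X :\: S) wo w u b =
  wtV X w S + \sum_(a in S :\ u) wo w a u + \sum_(b in X :\: S) wu w [set u; b].
Proof.
move=> uS uX; rewrite /wtV (big_setD1 u uS) /=.
rewrite [\sum_(a in S) \sum_(b in X :\: S) _](big_setD1 u uS) /=.
have E : X :\: (S :\ u) = [set u] :|: (X :\: S).
  apply/setP => x; rewrite !inE.
  by case: (eqVneq x u) => [->|]; rewrite ?eqxx ?uX //=.
have nu : u \notin X :\: S by rewrite !inE uS.
rewrite E pairs2_split; last by apply/disjI => x; rewrite inE => /eqP ->; apply/negP.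
rewrite pairs2_set1 big_set0 big_set1.
rewrite [\sum_(a in S :\ u) \sum_(v in _ |: _) _](eq_bigr (fun a => wo w a u + \sum_(b in X :\: S) wo w a b)); last first.
  by move=> a _; rewrite big_setU1.
rewrite big_split /=; lia.
Qed.

End W.

Section EF.
Variable T : finType.
Implicit Types (X Y Z R S : {set T}) (w : weight T).

Definition Dq X R w u := \sum_(v in X :\: R) (wu w [set u; v] - wo w u v).

Lemma setD_split X R S : R \subset X -> S \subset R ->
  X :\: S = (R :\: S) :|: (X :\: R).
Proof.
move=> RX SR; apply/setP => x; rewrite !inE.
case xS: (x \in S); case xR: (x \in R); rewrite ?orbF ?orbT //=.
- by rewrite (subsetP SR x xS) in xR.
- by rewrite (subsetP RX x xR).
Qed.

Lemma EF (GA : trigraph T) w R S : R \subset tverts GA -> S \subset R ->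
  (forall u v, u \in R -> v \in tverts GA :\: R -> wo w u v <= wu w [set u; v]) ->
  wtV R (red_weight GA w R) S + ext GA w R =
  wtV (tverts GA) w S + \sum_(u in S) (Dq (tverts GA) R w u - wv w u).
Proof.
move=> RX + hw; move: {2}#|S| (erefl #|S|) => n; elim: n S => [|n IH] S cS SR.
  move/eqP: cS; rewrite cards_eq0 => /eqP ->.
  rewrite /wtV /ext !big_set0 !setD0 !add0n addn0.
  have EX : tverts GA = R :|: (tverts GA :\: R).
    by rewrite -[R in R :|: _]setD0 -(setD_split RX (sub0set R)) setD0.
  rewrite [in RHS]EX pairs2_split /=; first lia.
  by apply/disjI => x; rewrite !inE => -> /andP [].
have [u uS] : exists u, u \in S.
  by apply/set0Pn; rewrite -card_gt0 cS.
have uR := subsetP SR u uS.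
have uX := subsetP RX u uR.
have IH' := IH (S :\ u).
rewrite (cardsD1 u S) uS in cS; case: cS => cS.
have SR' : S :\ u \subset R by apply: subset_trans SR; apply: subsetDl.
move: (IH' cS SR') => {IH IH'} IH.
have h1 := R1 (red_weight GA w R) uS uR.
have h2 := R1 (w) uS uX.
rewrite /= -/(Dq (tverts GA) R w u) in h1.
rewrite (setD_split RX SR) in h2.
have dRX : [disjoint R :\: S & tverts GA :\: R].
  by apply/disjI => x; rewrite !inE => /andP [_ ->] /andP [].
rewrite !sumU // in h2.
rewrite (big_setD1 u uS) /=.
have hD : Dq (tverts GA) R w u + \sum_(b in tverts GA :\: R) wo w u b =
          \sum_(b in tverts GA :\: R) wu w [set u; b].
  rewrite /Dq -big_split /=; apply: eq_bigr => b bXR.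
  by rewrite subnK // hw.
set D := Dq _ _ _ _ in hD *.
lia.
Qed.

End EF.

Section L2.
Variable T : finType.
Implicit Types (X Y Z R S : {set T}) (w : weight T).

Lemma L2 (GA : trigraph T) w R S : R \subset tverts GA -> S \subset R ->
  (forall u v, u \in tverts GA -> v \in tverts GA -> u != v -> wo w u v <= wu w [set u; v]) ->
  exists2 S' : {set T}, S' \subset S &
    wtV R (red_weight GA w R) S + ext GA w R <= wtV (tverts GA) w S'.
Proof.
move=> RX + hw; move: {2}#|S| (erefl #|S|) => n.
elim: n {-2}n (leqnn n) S => [|m IH] n Hn S cS SR.
  exists S => //; rewrite (EF RX SR); last first.
    by move=> u v uR; rewrite inE => /andP [vR vX]; apply: hw => //;
      [apply: (subsetP RX) | apply/eqP => E; rewrite -E uR in vR].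
  suff -> : S = set0 by rewrite big_set0 addn0.
  by apply/eqP; rewrite -cards_eq0 cS; lia.
case: (boolP [exists u in S, 0 < Dq (tverts GA) R w u - wv w u]).
- case/exists_inP => u uS epos.
  have uR := subsetP SR u uS.
  have uX := subsetP RX u uR.
  have SR' : S :\ u \subset R by apply: subset_trans SR; apply: subsetDl.
  have cS' : #|S :\ u| = n.-1.
    by move: (cardsD1 u S); rewrite uS cS; lia.
  have [S' S'S le'] := IH n.-1 ltac:(lia) (S :\ u) cS' SR'.
  exists S'; first by apply: subset_trans S'S _; apply: subsetDl.
  apply: leq_trans le'; rewrite leq_add2r.
  have h1 := R1 (red_weight GA w R) uS uR.
  rewrite /= -/(Dq (tverts GA) R w u) in h1.
  have e0 : wv w u - Dq (tverts GA) R w u = 0 by lia.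
  rewrite e0 in h1.
  have : \sum_(b in R :\: S) wo w u b <= \sum_(b in R :\: S) wu w [set u; b].
    apply: leq_sum => b; rewrite inE => /andP [bS bR]; apply: hw => //.
      exact: (subsetP RX).
    by apply/eqP => E; rewrite -E uS in bS.
  lia.
- rewrite negb_exists_in => /forall_inP h0.
  exists S => //; rewrite (EF RX SR); last first.
    by move=> u v uR; rewrite inE => /andP [vR vX]; apply: hw => //;
      [apply: (subsetP RX) | apply/eqP => E; rewrite -E uR in vR].
  rewrite big1 ?addn0 // => u uS; have := h0 u uS; lia.
Qed.

End L2.

Section Blocks.
Variable T : finType.
Implicit Types (X Y Z W R S : {set T}) (w : weight T).

Definition vt w S Y := \sum_(u in Y :&: S) wv w u.
Definition ot w S Y Z := \sum_(u in Y :&: S) \sum_(v in Z :\: S) wo w u v.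
Definition pt w S Y := \sum_(e in pairs2 (Y :\: S)) wu w e.
Definition xt w S Y Z := \sum_(u in Y :\: S) \sum_(v in Z :\: S) wu w [set u; v].

Lemma wt1 w S Y : wtV Y w (Y :&: S) = vt w S Y + ot w S Y Y + pt w S Y.
Proof.
rewrite /wtV; have -> : Y :\: (Y :&: S) = Y :\: S.
  by apply/setP => x; rewrite !inE; case: (x \in Y); rewrite ?andbF ?andbT.
by [].
Qed.

Lemma disjIS Y Z S : [disjoint Y & Z] -> [disjoint Y :&: S & Z :&: S].
Proof. by move=> d; apply/disjI => x; rewrite !inE => /andP [xY _] /andP [xZ _]; apply: (disjE d xY xZ). Qed.

Lemma disjDS Y Z S : [disjoint Y & Z] -> [disjoint Y :\: S & Z :\: S].
Proof. by move=> d; apply/disjI => x; rewrite !inE => /andP [_ xY] /andP [_ xZ]; apply: (disjE d xY xZ). Qed.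

Lemma vtU w S Y Z : [disjoint Y & Z] -> vt w S (Y :|: Z) = vt w S Y + vt w S Z.
Proof. by move=> d; rewrite /vt setIUl sumU // disjIS. Qed.

Lemma otUl w S Y Z W : [disjoint Y & Z] -> ot w S (Y :|: Z) W = ot w S Y W + ot w S Z W.
Proof. by move=> d; rewrite /ot setIUl sumU // disjIS. Qed.

Lemma otUr w S Y Z W : [disjoint Y & Z] -> ot w S W (Y :|: Z) = ot w S W Y + ot w S W Z.
Proof.
by move=> d; rewrite /ot setDUl -big_split /=; apply: eq_bigr => u _; rewrite sumU // disjDS.
Qed.

Lemma xtUl w S Y Z W : [disjoint Y & Z] -> xt w S (Y :|: Z) W = xt w S Y W + xt w S Z W.
Proof. by move=> d; rewrite /xt setDUl sumU // disjDS. Qed.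

Lemma xtUr w S Y Z W : [disjoint Y & Z] -> xt w S W (Y :|: Z) = xt w S W Y + xt w S W Z.
Proof.
by move=> d; rewrite /xt setDUl -big_split /=; apply: eq_bigr => u _; rewrite sumU // disjDS.
Qed.

Lemma ptU w S Y Z : [disjoint Y & Z] -> pt w S (Y :|: Z) = pt w S Y + pt w S Z + xt w S Y Z.
Proof. by move=> d; rewrite /pt setDUl pairs2_split // disjDS. Qed.

Lemma sumIS (F : T -> nat) Y S :
  \sum_(u in Y :&: S) F u = \sum_(u in Y) (if u \in S then F u else 0).
Proof. by rewrite -big_mkcondr; apply: eq_bigl => x; rewrite !inE. Qed.

Lemma sumDS (F : T -> nat) Y S :
  \sum_(u in Y :\: S) F u = \sum_(u in Y) (if u \notin S then F u else 0).
Proof. by rewrite -big_mkcondr; apply: eq_bigl => x; rewrite !inE andbC. Qed.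

End Blocks.

Section Key.
Variable T : finType.
Implicit Types (X Y Z W R S : {set T}) (w : weight T).

Lemma disj_neq X Y u v : [disjoint X & Y] -> u \in X -> v \in Y -> u != v.
Proof. by move=> d uX vY; apply/eqP => E; rewrite E in uX; apply: (disjE d uX vY). Qed.

Lemma KEY (w wB : weight T) (A B C S : {set T}) :
  [disjoint A & B] -> [disjoint A & C] -> [disjoint B & C] ->
  S \subset A :|: B :|: C ->
  (forall a b, a \in A -> b \in B ->
     [/\ wo w a b = 0, wo w b a = 0 & wu w [set a; b] = 0]) ->
  (forall u, u \in B -> wv wB u = wv w u) ->
  (forall u v, u \in B :|: C -> v \in B :|: C -> u != v ->
     ~~ ((u \in C) && (v \in C)) ->
     [/\ wo wB u v = wo w u v, wo wB v u = wo w v u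
       & wu wB [set u; v] = wu w [set u; v]]) ->
  wtV (A :|: B :|: C) w S + wtV C wB (C :&: S) =
  wtV (A :|: C) w ((A :|: C) :&: S) + wtV (B :|: C) wB ((B :|: C) :&: S).
Proof.
move=> dAB dAC dBC sub zAB eqv eqB.
have dABC : [disjoint A :|: B & C].
  apply/disjI => x; rewrite inE => /orP [xA|xB] xC; [exact: disjE dAC xA xC | exact: disjE dBC xB xC].
rewrite -{1}(setIidPr sub) !wt1.
rewrite !(vtU, otUl, otUr, ptU, xtUl, xtUr) //.
have nC u : u \in B -> u \in C = false.
  by move=> uB; apply/negbTE/negP => uC; apply: (disjE dBC uB uC).
have inBC u : u \in B -> u \in B :|: C by move=> uB; rewrite inE uB.
have inBC' u : u \in C -> u \in B :|: C by move=> uC; rewrite inE uC orbT.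
have ncl u v : u \in B -> ~~ ((u \in C) && (v \in C)) by move=> uB; rewrite nC.
have ncr u v : v \in B -> ~~ ((u \in C) && (v \in C)) by move=> vB; rewrite (nC v) ?andbF.
have z1 : ot w S A B = 0.
  rewrite /ot big1 // => a; rewrite inE => /andP [aA _]; rewrite big1 // => b.
  by rewrite inE => /andP [_ bB]; have [-> _ _] := zAB a b aA bB.
have z2 : ot w S B A = 0.
  rewrite /ot big1 // => b; rewrite inE => /andP [bB _]; rewrite big1 // => a.
  by rewrite inE => /andP [_ aA]; have [_ -> _] := zAB a b aA bB.
have z3 : xt w S A B = 0.
  rewrite /xt big1 // => a; rewrite inE => /andP [_ aA]; rewrite big1 // => b.
  by rewrite inE => /andP [_ bB]; have [_ _ ->] := zAB a b aA bB.
have e1 : vt wB S B = vt w S B.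
  by apply: eq_bigr => u; rewrite inE => /andP [uB _]; apply: eqv.
have e2 : ot wB S B B = ot w S B B.
  apply: eq_bigr => u; rewrite inE => /andP [uB uS]; apply: eq_bigr => v.
  rewrite inE => /andP [vS vB].
  have uv : u != v by apply/eqP => E; rewrite -E uS in vS.
  by have [-> _ _] := eqB u v (inBC u uB) (inBC v vB) uv (ncl u v uB).
have e3 : ot wB S B C = ot w S B C.
  apply: eq_bigr => u; rewrite inE => /andP [uB uS]; apply: eq_bigr => v.
  rewrite inE => /andP [vS vC].
  by have [-> _ _] := eqB u v (inBC u uB) (inBC' v vC) (disj_neq dBC uB vC) (ncl u v uB).
have e4 : ot wB S C B = ot w S C B.
  apply: eq_bigr => u; rewrite inE => /andP [uC uS]; apply: eq_bigr => v.
  rewrite inE => /andP [vS vB].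
  have uv : u != v by rewrite eq_sym; apply: disj_neq dBC vB uC.
  by have [-> _ _] := eqB u v (inBC' u uC) (inBC v vB) uv (ncr u v vB).
have e5 : pt wB S B = pt w S B.
  apply: eq_bigr => e /pairs2P [u [v [uB vB uv ->]]].
  rewrite inE in uB; rewrite inE in vB.
  case/andP: uB => _ uB; case/andP: vB => _ vB.
  by have [_ _ ->] := eqB u v (inBC u uB) (inBC v vB) uv (ncl u v uB).
have e6 : xt wB S B C = xt w S B C.
  apply: eq_bigr => u; rewrite inE => /andP [uS uB]; apply: eq_bigr => v.
  rewrite inE => /andP [vS vC].
  by have [_ _ ->] := eqB u v (inBC u uB) (inBC' v vC) (disj_neq dBC uB vC) (ncl u v uB).
lia.
Qed.

End Key.

Section L3.
Variable T : finType.

Lemma ifsum (b : bool) (Y : {set T}) (g : T -> nat) :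
  (if b then \sum_(v in Y) g v else 0) = \sum_(v in Y) (if b then g v else 0).
Proof. by case: b; rewrite // big1. Qed.

Lemma sum3 (Y Z : {set T}) (f1 f2 f3 : T -> T -> nat) :
  \sum_(u in Y) \sum_(v in Z) f1 u v + \sum_(u in Y) \sum_(v in Z) f2 u v
  + \sum_(u in Y) \sum_(v in Z) f3 u v =
  \sum_(u in Y) \sum_(v in Z) (f1 u v + f2 u v + f3 u v).
Proof. by rewrite -!big_split; apply: eq_bigr => u _; rewrite -!big_split. Qed.

Lemma otBC (wB : weight T) (B C S : {set T}) :
  ot wB S B C = \sum_(u in B) \sum_(v in C)
     (if u \in S then (if v \notin S then wo wB u v else 0) else 0).
Proof.
rewrite /ot sumIS; apply: eq_bigr => u _; rewrite sumDS ifsum //.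
Qed.

Lemma otCB (wB : weight T) (B C S : {set T}) :
  ot wB S C B = \sum_(u in B) \sum_(v in C)
     (if v \in S then (if u \notin S then wo wB v u else 0) else 0).
Proof.
rewrite /ot sumIS exchange_big /=; apply: eq_bigr => u _.
by rewrite sumDS ifsum //; apply: eq_bigr => v _; case: (v \in S); case: (u \in S).
Qed.

Lemma xtBC (wB : weight T) (B C S : {set T}) :
  xt wB S B C = \sum_(u in B) \sum_(v in C)
     (if u \notin S then (if v \notin S then wu wB [set u; v] else 0) else 0).
Proof.
rewrite /xt sumDS; apply: eq_bigr => u _; rewrite sumDS ifsum //.
Qed.

Lemma L3 (wB : weight T) (B C S1 S2 : {set T}) :
  [disjoint B & C] -> B :&: S1 = B :&: S2 -> C :&: S1 \subset C :&: S2 ->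
  (forall u v, u \in B -> v \in C -> wo wB v u <= wu wB [set u; v]) ->
  wtV (B :|: C) wB ((B :|: C) :&: S2) + wtV C wB (C :&: S1) <=
  wtV (B :|: C) wB ((B :|: C) :&: S1) + wtV C wB (C :&: S2).
Proof.
move=> dBC hI hsub hw.
rewrite !wt1 !(vtU, otUl, otUr, ptU, xtUl, xtUr) //.
have hD : B :\: S1 = B :\: S2.
  apply/setP => x; rewrite !inE; case xB: (x \in B); rewrite ?andbF ?andbT //.
  by move/setP: hI => /(_ x); rewrite !inE xB /= => ->.
have e1 : vt wB S1 B = vt wB S2 B by rewrite /vt hI.
have e2 : ot wB S1 B B = ot wB S2 B B by rewrite /ot hI hD.
have e3 : pt wB S1 B = pt wB S2 B by rewrite /pt hD.
suff : ot wB S2 B C + ot wB S2 C B + xt wB S2 B C <=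
       ot wB S1 B C + ot wB S1 C B + xt wB S1 B C by lia.
rewrite (otBC wB B C S1) (otBC wB B C S2) (otCB wB B C S1) (otCB wB B C S2).
rewrite (xtBC wB B C S1) (xtBC wB B C S2) !sum3.
apply: leq_sum => u uB; apply: leq_sum => v vC.
have eu : (u \in S1) = (u \in S2).
  by move/setP: hI => /(_ u); rewrite !inE uB.
have ev : v \in S1 -> v \in S2.
  by move=> vS; have := subsetP hsub v; rewrite !inE vC vS => /(_ isT).
have := hw u v uB vC.
rewrite eu; case: (u \in S2); case E1: (v \in S1); case E2: (v \in S2) => //=;
  try lia; by move: (ev E1); rewrite E2.
Qed.

End L3.

Section Main.
Variable T : finType.
Implicit Types (X Y Z W R S : {set T}) (w : weight T).

Lemma relax_le (G H : trigraph T) X e : relaxation G X H -> e \in pairs2 X ->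
  (tadj H e <= 0)%R = (tadj G e <= 0)%R.
Proof. by case=> _ h eX; case: (h e eX) => [-> | [-> ->]]. Qed.

Lemma stableP (G : trigraph T) S : stable G S <->
  S \subset tverts G /\
  (forall u v, u \in S -> v \in S -> u != v -> (tadj G [set u; v] <= 0)%R).
Proof.
rewrite /stable; split.
  case/andP => sub /forall_inP h; split => // u v uS vS uv.
  by have := h u uS => /forall_inP /(_ v vS) /implyP; apply.
case=> sub h; apply/andP; split => //; apply/forall_inP => u uS.
by apply/forall_inP => v vS; apply/implyP; exact: h.
Qed.

Lemma stable0 (G : trigraph T) : stable G set0.
Proof. by apply/stableP; split; [apply: sub0set | move=> u v; rewrite inE]. Qed.

Lemma stable_sub (G : trigraph T) S S' : S' \subset S -> stable G S -> stable G S'.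
Proof.
move=> sub /stableP [sS h]; apply/stableP; split; first exact: subset_trans sub sS.
by move=> u v uS vS; apply: h; apply: (subsetP sub).
Qed.

Lemma alpha_arg (G : trigraph T) w : exists2 S, stable G S & alpha G w = wt G w S.
Proof.
rewrite /alpha (bigmax_eq_arg set0 (stable0 G)).
case: arg_maxnP; first exact: stable0.
by move=> S stS _; exists S.
Qed.

End Main.

Unset Implicit Arguments.

Lemma arith1 (a b c d e m k : nat) :
  d <= m -> c <= e -> b + k = e -> a + b = c + d -> a <= k + m.
Proof. lia. Qed.

Lemma arith2 (a b c d e f g h k : nat) :
  f + k = g + h -> a + b = c + d -> e + b <= d + f -> g + h <= c -> k + e <= a.
Proof. lia. Qed.

Theorem proposition3p9 (T : finType) (G : trigraph T) (w : weight T)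
    (A B C : {set T}) (GA GB : trigraph T) (k : nat) (wB : weight T) :
  is_trigraph G ->
  is_weight_function G w ->
  cut_partition G A B C ->
  relaxation G (A :|: C) GA ->
  relaxation G (B :|: C) GB ->
  is_weight_function GB wB ->
  (forall u, u \in B -> wv wB u = wv w u) ->
  (forall u v, u \in B :|: C -> v \in B :|: C -> u != v ->
     ~~ ((u \in C) && (v \in C)) ->
     [/\ wo wB u v = wo w u v, wo wB v u = wo w v u
       & wu wB [set u; v] = wu w [set u; v]]) ->
  (forall SC : {set T}, SC \subset C -> stable GB SC ->
     wt (induced GB C) wB SC + k = alphaAC GA w A SC) ->
  alpha G w = k + alpha GB wB.
Proof.
move=> _ wfG [[VABC dAB dAC dBC] [_ _ cutAB]] relA relB wfGB eqv eqB hk.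
have relA' := relA; have relB' := relB.
case: relA' => GAv _; case: relB' => GBv _.
set V := tverts G in VABC *.
have AV : A \subset V by rewrite -VABC; apply/subsetP => x xA; rewrite !inE xA.
have BV : B \subset V by rewrite -VABC; apply/subsetP => x xB; rewrite !inE xB orbT.
have CV : C \subset V by rewrite -VABC; apply/subsetP => x xC; rewrite !inE xC orbT.
have ACV : A :|: C \subset V by rewrite subUset AV CV.
have BCV : B :|: C \subset V by rewrite subUset BV CV.
have wle u v : u \in V -> v \in V -> u != v -> wo w u v <= wu w [set u; v].
  by move=> uV vV uv; case: (wfG u v uV vV uv).
have zAB a b : a \in A -> b \in B ->
    [/\ wo w a b = 0, wo w b a = 0 & wu w [set a; b] = 0].
  move=> aA bB; have [h _] := wfG a b (subsetP AV a aA) (subsetP BV b bB) (disj_neq dAB aA bB).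
  by apply: h; rewrite cutAB.
have key (S : {set T}) : S \subset V ->
    wtV V w S + wtV C wB (C :&: S) =
    wtV (A :|: C) w ((A :|: C) :&: S) + wtV (B :|: C) wB ((B :|: C) :&: S).
  by move=> sV; rewrite -VABC; apply: KEY => //; rewrite VABC.
have upA (S : {set T}) : S \subset A :|: C -> stable G S ->
    wtV (A :|: C) w S <= alphaAC GA w A (C :&: S).
  move=> SAC /stableP [SV hS].
  have RX : A :|: (C :&: S) \subset tverts GA.
    by rewrite GAv; apply: setUS; apply: subsetIl.
  have SR : S \subset A :|: (C :&: S).
    apply/subsetP => x xS; have := subsetP SAC x xS; rewrite !inE xS andbT.
    by case/orP => ->; rewrite ?orbT.
  rewrite /alphaAC -GAv.
  have := EF RX SR.
  have hw : forall u v, u \in A :|: (C :&: S) -> v \in tverts GA :\: (A :|: (C :&: S)) ->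
      wo w u v <= wu w [set u; v].
    move=> u v uR; rewrite inE => /andP [vR vX]; apply: wle.
    - by apply: (subsetP ACV); rewrite -GAv; apply: (subsetP RX).
    - by apply: (subsetP ACV); rewrite -GAv.
    - by apply/eqP => E; rewrite -E uR in vR.
  move=> /(_ w hw) EFe.
  have stR : stable (red_graph GA (A :|: (C :&: S))) S.
    apply/stableP; split => // u v uS vS uv /=.
    rewrite (relax_le relA) ?hS //; apply: pairs2_in => //; exact: (subsetP SAC).
  rewrite /alpha; apply: (leq_trans (leq_addr (\sum_(u in S) (Dq (tverts GA) (A :|: C :&: S) w u - wv w u)) _)).
  rewrite -EFe leq_add2r.
  exact: (leq_bigmax_cond (F := fun S0 => wt (red_graph GA (A :|: (C :&: S)))
                  (red_weight GA w (A :|: (C :&: S))) S0) S stR).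
apply/eqP; rewrite eqn_leq; apply/andP; split.
- apply/bigmax_leqP => S stS.
  move/stableP: (stS) => [SV hS].
  rewrite wtE -/V.
  have := key S SV.
  have stBC : stable GB ((B :|: C) :&: S).
    apply/stableP; split; first by rewrite GBv subsetIl.
    move=> u v; rewrite !inE => /andP [uBC uS] /andP [vBC vS] uv.
    by rewrite (relax_le relB) ?hS //; apply: pairs2_in; rewrite ?inE.
  have stC : stable GB (C :&: S).
    apply: stable_sub stBC; apply: setSI; apply: subsetUr.
  have := hk _ (subsetIl C S) stC.
  have := upA ((A :|: C) :&: S) (subsetIl _ _) (stable_sub (subsetIr _ _) stS).
  have -> : C :&: ((A :|: C) :&: S) = C :&: S.
    by apply/setP => x; rewrite !inE; case: (x \in C); rewrite ?orbT ?andbF.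
  have := leq_bigmax_cond (F := fun S0 => wt GB wB S0) _ stBC.
  have -> : wt (induced GB C) wB (C :&: S) = wtV C wB (C :&: S) by [].
  rewrite wtE GBv /alpha.
  move=> h1 h2 h3 h4; exact: arith1 h1 h2 h3 h4.
have [S' stS' ->] := alpha_arg GB wB.
move/stableP: (stS') => [S'BC hS']; rewrite GBv in S'BC.
set SC := C :&: S'; set SB := B :&: S'; set R := A :|: SC.
have stSC : stable GB SC by apply: stable_sub stS'; apply: subsetIr.
have hkS := hk SC (subsetIl C S') stSC.
have [T0 stT0 eqT0] := alpha_arg (red_graph GA R) (red_weight GA w R).
move/stableP: (stT0) => [T0R hT0]; rewrite /= in T0R.
have RX : R \subset tverts GA by rewrite GAv; apply: setUS; apply: subsetIl.
have hw2 u v : u \in tverts GA -> v \in tverts GA -> u != v -> wo w u v <= wu w [set u; v].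
  rewrite GAv => uX vX; apply: wle; exact: (subsetP ACV).
have [T' T'T0 leT'] := L2 RX T0R hw2.
have T'R : T' \subset R := subset_trans T'T0 T0R.
have RAC : R \subset A :|: C by apply: setUS; apply: subsetIl.
have T'AC : T' \subset A :|: C := subset_trans T'R RAC.
have SBB : SB \subset B by apply: subsetIl.
have SBS' : SB \subset S' by apply: subsetIr.
have nBAC x : x \in B -> x \in A :|: C -> False.
  move=> xB; rewrite inE => /orP [xA|xC]; [exact: disjE dAB xA xB | exact: disjE dBC xB xC].
have dACSB : [disjoint A :|: C & SB].
  by apply/disjI => x xAC xSB; apply: (nBAC x (subsetP SBB x xSB) xAC).
have dBT' : [disjoint B & T'].
  by apply/disjI => x xB xT; apply: (nBAC x xB (subsetP T'AC x xT)).
set S := T' :|: SB.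
have SV : S \subset V by rewrite subUset (subset_trans T'AC ACV) (subset_trans SBB BV).
have cross u v : u \in T' -> v \in SB -> (tadj G [set u; v] <= 0)%R.
  move=> uT vSB; have vB := subsetP SBB v vSB.
  have := subsetP T'R u uT; rewrite !inE => /orP [uA | /andP [uC uS']].
    by rewrite cutAB.
  have vS' := subsetP SBS' v vSB.
  have uv : u != v by rewrite eq_sym; apply: disj_neq dBC vB uC.
  rewrite -(relax_le relB) ?hS' //; apply: pairs2_in => //; rewrite inE ?uC ?vB ?orbT //.
have stS : stable G S.
  apply/stableP; split => // u v; rewrite /S !in_setU => /orP [uT|uB] /orP [vT|vB] uv.
  - have uT0 := subsetP T'T0 u uT; have vT0 := subsetP T'T0 v vT.
    rewrite -(relax_le relA) ?hT0 //; apply: pairs2_in => //; exact: (subsetP T'AC).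
  - exact: cross.
  - by rewrite setUC; apply: cross.
  - rewrite -(relax_le relB) ?hS' //; try exact: (subsetP SBS').
    by apply: pairs2_in => //; apply: (subsetP S'BC); apply: (subsetP SBS').
apply: leq_trans (leq_bigmax_cond (F := fun S0 => wt G w S0) S stS).
have hkey := key S SV.
have E1 : (A :|: C) :&: S = T'.
  by rewrite setIUr (setIidPr T'AC) (disjoint_setI0 dACSB) setU0.
have E2 : B :&: S = B :&: S'.
  by rewrite setIUr (disjoint_setI0 dBT') set0U /SB setIA setIid.
have E3 : C :&: S \subset C :&: S'.
  apply/subsetP => x; rewrite !inE => /andP [xC /orP [xT | /andP [xB _]]].
    have := subsetP T'R x xT; rewrite !inE xC /= => /orP [xA|] //.
    by case: (disjE dAC xA xC).
  by case: (disjE dBC xB xC).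
have hwB u v : u \in B -> v \in C -> wo wB v u <= wu wB [set u; v].
  move=> uB vC; rewrite setUC; case: (wfGB v u) => //; rewrite ?GBv ?inE ?uB ?vC ?orbT //.
  by rewrite eq_sym; apply: disj_neq dBC uB vC.
have hL3 := L3 dBC E2 E3 hwB.
rewrite E1 in hkey.
have -> : wt GB wB S' = wtV (B :|: C) wB ((B :|: C) :&: S') by rewrite wtE GBv (setIidPr S'BC).
change (wtV C wB SC + k = alphaAC GA w A SC) in hkS.
rewrite /alphaAC -/R eqT0 in hkS.
change (wtV C wB SC + k = wtV R (red_weight GA w R) T0 + ext GA w R) in hkS.
rewrite GAv in leT'.
have -> : wt G w S = wtV V w S by [].
exact: arith2 hkS hkey hL3 leT'.
Qed.
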